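(* Let $A_1,\dots,A_N\in\mathbb{R}^{2\times2}$ with $\det[A_j,A_k]=0$ for all $j\ne k$, and assume $A_1$ has non-real eigenvalues. Then there exists $S\in GL(2,\mathbb{R})$ such that $$S^{-1}A_jS=\begin{pmatrix}s_j&-t_j\\t_j&s_j\end{pmatrix},\qquad j=1,\dots,N,$$ for some $s_j,t_j\in\mathbb{R}$.
   Context: $[A,B]=AB-BA$. *)

(* Defs.v *)
From mathcomp Require Import all_boot all_algebra.
From mathcomp Require Export complex.
From mathcomp Require Import reals.
Set Implicit Arguments.
Unset Strict Implicit.
Import GRing.Theory Num.Theory ComplexField.
Local Open Scope ring_scope.
Local Open Scope complex_scope.

Definition commmx (R : pzRingType) (n : nat) (A B : 'M[R]_n) : 'M[R]_n :=
  A *m B - B *m A.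

Definition cplx_mx (R : rcfType) (m n : nat) (A : 'M[R]_(m, n)) : 'M[R[i]]_(m, n) :=
  map_mx (fun x => x%:C) A.

Definition nonreal_eigenvalues (R : rcfType) (n : nat) (A : 'M[R]_n) : Prop :=
  forall z : R[i], eigenvalue (cplx_mx A) z -> complex.Im z != 0.

(* Main.v *)
Require Import Defs.
From mathcomp Require Import all_boot all_algebra.
From mathcomp Require Import all_order reals ring lra.
Import Order.TTheory GRing.Theory Num.Theory.
Local Open Scope ring_scope.

Lemma det2 (R : comNzRingType) (M : 'M[R]_2) :
  \det M = M 0 0 * M 1 1 - M 0 1 * M 1 0.
Proof.
rewrite (expand_det_row _ 0) !big_ord_recl big_ord0 /cofactor !det_mx11 !mxE /=.
have l1 : lift 0 0 = 1 :> 'I_2 by apply: val_inj.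
have l2 : lift 1 0 = 0 :> 'I_2 by apply: val_inj.
rewrite l1 /= l2 expr0 expr1.
have -> : (ord0 : 'I_2) = 0 by apply: val_inj.
ring.
Qed.

Lemma mul2 (R : comNzRingType) (M N : 'M[R]_2) i j :
  (M *m N) i j = M i 0 * N 0 j + M i 1 * N 1 j.
Proof.
have e1 : lift ord0 ord0 = 1 :> 'I_2 by apply: val_inj.
have e0 : ord0 = 0 :> 'I_2 by apply: val_inj.
by rewrite mxE !big_ord_recl big_ord0 addr0 e1 e0.
Qed.

Lemma sub2 (R : pzRingType) (M N : 'M[R]_2) i j : (M - N) i j = M i j - N i j.
Proof. by rewrite !mxE. Qed.

Lemma disc_neg {R : realType} (A : 'M[R]_2) :
  nonreal_eigenvalues A ->
  (A 0 0 - A 1 1) ^+ 2 + 4 * (A 0 1 * A 1 0) < 0.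
Proof.
move=> H; rewrite ltNge; apply/negP => hD.
set D := _ + _ in hD.
pose l := (A 0 0 + A 1 1 + Num.sqrt D) / 2.
have hs : Num.sqrt D ^+ 2 = D by rewrite sqr_sqrtr.
have ev : eigenvalue (cplx_mx A) (l%:C)%C.
  rewrite /eigenvalue /eigenspace kermx_eq0 row_free_unit unitmxE unitfE negbK.
  have -> : cplx_mx A - (l%:C)%C%:M = map_mx (real_complex R) (A - l%:M).
    by rewrite map_mxB /= map_scalar_mx.
  rewrite det_map_mx fmorph_eq0 det2 !mxE /=.
  apply/eqP; rewrite /l; move: hs; rewrite /D => hs.
  set r := Num.sqrt _ in hs *.
  nra.
by move: (H _ ev); rewrite /= eqxx.
Qed.

Lemma quad_key {R : realType} (a b c d x y z w : R) :
  (a - d) ^+ 2 + 4 * (b * c) < 0 ->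
  (z * b - y * c) * (y * c - z * b) - (x * b + y * d - (a * y + b * w)) * (z * a + w * c - (c * x + d * z)) = 0 ->
  c * y = b * z /\ c * (x - w) = z * (a - d).
Proof.
move=> hD hdet.
set e := a - d in hD *.
set p := c * y - b * z; set q := c * (x - w) - z * e.
have hc : c != 0.
  by apply/negP => /eqP c0; move: hD; rewrite c0 mulr0 mulr0 addr0 ltNge sqr_ge0.
have h1 : (2 * c * p + e * q) ^+ 2 - (e ^+ 2 + 4 * (b * c)) * q ^+ 2 = 0.
  transitivity (- 4 * c * c * ((z * b - y * c) * (y * c - z * b) - (x * b + y * d - (a * y + b * w)) * (z * a + w * c - (c * x + d * z)))).
    rewrite /p /q /e; ring.
  by rewrite hdet mulr0.
have hq : q = 0.
  move: h1 hD; set u := (_ ^+ 2 : R); set v := q ^+ 2; set D := (e ^+ 2 + _ : R).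
  have hu : 0 <= u by rewrite sqr_ge0.
  have hv : 0 <= v by rewrite sqr_ge0.
  move=> h1 hD; have : v = 0 by nra.
  by move/eqP; rewrite sqrf_eq0 => /eqP.
have hp : c * p = 0.
  have : (2 * (c * p)) ^+ 2 = 0 by rewrite -h1 hq; ring.
  by move/eqP; rewrite sqrf_eq0 => /eqP h2; lra.
move/eqP: hp; rewrite mulf_eq0 (negbTE hc) /= => /eqP hp.
split; apply/eqP; rewrite -subr_eq0; apply/eqP; [exact: hp|].
by move: hq; rewrite /q /e.
Qed.

Lemma comm_key {R : realType} (A B : 'M[R]_2) :
  (A 0 0 - A 1 1) ^+ 2 + 4 * (A 0 1 * A 1 0) < 0 ->
  \det (commmx B A) = 0 ->
  A 1 0 * B 0 1 = A 0 1 * B 1 0 /\ A 1 0 * (B 0 0 - B 1 1) = B 1 0 * (A 0 0 - A 1 1).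
Proof.
move=> hD; rewrite /commmx det2 !sub2 !mul2 => h.
apply: quad_key => //.
rewrite -h; ring.
Qed.

Lemma ord2_cases (i : 'I_2) : i = 0 \/ i = 1.
Proof. case: i => [[|[|//]]] hi; [left|right]; exact: val_inj. Qed.

Definition Mst {R : pzRingType} (s t : R) : 'M[R]_2 :=
  \matrix_(a < 2, b < 2) (if a == b then s else if a == 0 then - t else t).

Definition Smx {R : realType} (A : 'M[R]_2) : 'M[R]_2 :=
  let D := (A 0 0 - A 1 1) ^+ 2 + 4 * (A 0 1 * A 1 0) in
  let tt := Num.sqrt (- D) / 2 in
  \matrix_(i < 2, j < 2) (if i == 0 then (if j == 0 then tt else (A 0 0 - A 1 1) / 2)
                          else (if j == 0 then 0 else A 1 0)).

Lemma conj_key {R : realType} (A B : 'M[R]_2) :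
  (A 0 0 - A 1 1) ^+ 2 + 4 * (A 0 1 * A 1 0) < 0 ->
  A 1 0 * B 0 1 = A 0 1 * B 1 0 -> A 1 0 * (B 0 0 - B 1 1) = B 1 0 * (A 0 0 - A 1 1) ->
  Smx A \in unitmx /\ exists s t : R, invmx (Smx A) *m B *m Smx A = Mst s t.
Proof.
move=> hD h1 h2.
set D := ((A 0 0 - A 1 1) ^+ 2 + _ : R) in hD.
have hc : A 1 0 != 0.
  by apply/negP => /eqP c0; move: hD; rewrite /D c0 !mulr0 addr0 ltNge sqr_ge0.
set tt := Num.sqrt (- D) / 2.
have htt : tt * tt = - D / 4.
  rewrite /tt -[Num.sqrt _ / 2 * _]/((Num.sqrt (- D) / 2) ^+ 2) expr_div_n sqr_sqrtr.
    by rewrite -natrX.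
  by rewrite oppr_ge0 ltW.
have ht0 : tt != 0.
  rewrite /tt mulf_eq0 invr_eq0 pnatr_eq0 orbF sqrtr_eq0 -ltNge oppr_gt0 //.
have hS : Smx A \in unitmx.
  by rewrite unitmxE unitfE det2 !mxE /= mulr0 subr0 mulf_neq0.
split => //.
set l := B 1 0 / A 1 0.
have hz : B 1 0 = l * A 1 0 by rewrite /l divfK.
have hy : B 0 1 = l * A 0 1.
  apply: (mulfI hc); rewrite h1 hz; ring.
have hx : B 0 0 = B 1 1 + l * (A 0 0 - A 1 1).
  apply: (mulfI hc); transitivity (A 1 0 * B 1 1 + A 1 0 * (B 0 0 - B 1 1)); first by ring.
  rewrite h2 hz; ring.
exists (B 1 1 - l * A 1 1 + l * (A 0 0 + A 1 1) / 2), (l * tt).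
suff hBS : B *m Smx A = Smx A *m Mst (B 1 1 - l * A 1 1 + l * (A 0 0 + A 1 1) / 2) (l * tt).
  by rewrite -mulmxA hBS mulmxA mulVmx // mul1mx.
have hl : l * (tt * tt) = l * (- D / 4) by rewrite htt.
move: hl; rewrite /D => hl.
apply/matrixP => i j; rewrite !mul2 !mxE.
case: (ord2_cases i) => ->; case: (ord2_cases j) => -> /=;
  (try rewrite -[Num.sqrt _ / 2]/tt); rewrite ?hx ?hy ?hz; lra.
Qed.

Theorem lemma2p8 (R : realType) (N : nat) (A : 'I_N.+1 -> 'M[R]_2) :
  (forall j k : 'I_N.+1, j != k -> \det (commmx (A j) (A k)) = 0) ->
  nonreal_eigenvalues (A ord0) ->
  exists2 S : 'M[R]_2, S \in unitmx &
    forall j : 'I_N.+1, exists s t : R,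
      invmx S *m A j *m S = \matrix_(a < 2, b < 2)
        (if a == b then s else if a == 0 then - t else t).
Proof.
move=> Hc Hne.
have hD := disc_neg (A ord0) Hne.
have hB : forall j, A ord0 1 0 * A j 0 1 = A ord0 0 1 * A j 1 0 /\
    A ord0 1 0 * (A j 0 0 - A j 1 1) = A j 1 0 * (A ord0 0 0 - A ord0 1 1).
  move=> j; case: (eqVneq j ord0) => [->|hj]; first by split; rewrite mulrC.
  exact: comm_key (A ord0) (A j) hD (Hc _ _ hj).
exists (Smx (A ord0)).
  by have [h1 h2] := hB ord0; case: (conj_key (A ord0) (A ord0) hD h1 h2).
move=> j; have [h1 h2] := hB j; case: (conj_key (A ord0) (A j) hD h1 h2) => _ [s [t ->]].
by exists s, t.
Qed.
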